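(* In the setting of the context, let $d\ge1$ be such that $\mathcal E_m\subset d\mathbb Z$ for every $m\ge1$. Then for every $j\ge1$ and all integers $\alpha,\beta$ with $P_j(\{\alpha\})>0$ and $P_j(\{\beta\})>0$, $\alpha-\beta$ is a multiple of $d$.
   Context: Let $\pi_m\ge2$ ($m\ge1$) be integers and $\eta_{m,i}\ge0$ ($m\ge1$, $0\le i\le\pi_m-1$) integers; write $\eta_m:i\mapsto\eta_{m,i}$. $\overline Y=\prod_{m\ge1}\{0,\dots,\pi_m-1\}$ with product uniform measure $\overline\nu$ and odometer $\overline S$ (add $1$ to the first coordinate with carry to the right). $\gamma(\overline y)=\sum_{m=1}^{\overline t(\overline y)}\eta_{m,\overline y_m}$ where $\overline t(\overline y)$ is the smallest $t\ge1$ with $\overline y_t<\pi_t-1$. $P_j$ is the distribution under $\overline\nu$ of $\gamma+\gamma\circ\overline S+\dots+\gamma\circ\overline S^{j-1}$. $\mathcal S_m=\eta_m(\{0,\dots,\pi_m-2\})\cup\big(\eta_{m,\pi_m-1}+\eta_{m+1}(\{0,\dots,\pi_{m+1}-2\})\big)$, $\mathcal E_m=\mathcal S_m-\mathcal S_m$. *)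

(* Defs.v *)
(* Indices are 0-based: paper index m >= 1 is index m-1 here. *)
From Stdlib Require Import Reals.
From mathcomp Require Import all_boot all_algebra.
Set Implicit Arguments. Unset Strict Implicit. Unset Printing Implicit Defensive.

(* Odometer on \bar Y (sequences y : nat -> nat, coordinate m < pi m):
   add 1 to the first coordinate with carry to the right. *)
Definition odo (pi : nat -> nat) (y : nat -> nat) : nat -> nat :=
  fun m => if all (fun i => y i == (pi i).-1) (iota 0 m)
           then (if y m == (pi m).-1 then 0 else (y m).+1) else y m.

Definition odo_iter (pi : nat -> nat) (k : nat) (y : nat -> nat) := iter k (odo pi) y.

(* first index t < n with y t < pi t - 1 (0-based version of \bar t);
   returns n if there is none below n *)
Definition tpos (pi : nat -> nat) (n : nat) (y : nat -> nat) : nat :=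
  find (fun t => y t < (pi t).-1) (iota 0 n).

(* gamma(y) = sum_{m <= t(y)} eta_{m, y_m}, computed from the first n coords;
   correct whenever tpos pi n y < n *)
Definition gamma_upto (pi : nat -> nat) (eta : nat -> nat -> nat) (n : nat)
  (y : nat -> nat) : nat :=
  \sum_(m < (tpos pi n y).+1) eta m (y m).

(* the j values gamma(S^k y), k < j, are all determined by the first n coords *)
Definition determined (pi : nat -> nat) (j n : nat) (y : nat -> nat) : bool :=
  all (fun k => has (fun t => odo_iter pi k y t < (pi t).-1) (iota 0 n)) (iota 0 j).

Definition Psum (pi : nat -> nat) (eta : nat -> nat -> nat) (j n : nat)
  (y : nat -> nat) : nat :=
  \sum_(k < j) gamma_upto pi eta n (odo_iter pi k y).

Fixpoint prefixes (pi : nat -> nat) (n : nat) : seq (seq nat) :=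
  match n with
  | 0 => [:: [::]]
  | n'.+1 => [seq rcons p x | p <- prefixes pi n', x <- iota 0 (pi n')]
  end.

Definition ext (p : seq nat) : nat -> nat := fun i => nth 0 p i.

(* the cylinder of prefix p lies in the event {sum = alpha} (determined at level n) *)
Definition good (pi : nat -> nat) (eta : nat -> nat -> nat) (j : nat) (alpha : int)
  (n : nat) (p : seq nat) : bool :=
  determined pi j n (ext p) && (Posz (Psum pi eta j n (ext p)) == alpha).

(* product-measure of the union of the level-n cylinders contained in the event *)
Definition Papprox (pi : nat -> nat) (eta : nat -> nat -> nat) (j : nat)
  (alpha : int) (n : nat) : R :=
  Rdiv (INR (count (good pi eta j alpha n) (prefixes pi n)))
       (INR (\prod_(i < n) pi i)%N).

Definition Pset pi eta j alpha : R -> Prop :=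
  fun r => exists n, r = Papprox pi eta j alpha n.

Lemma size_prefixes pi n : size (prefixes pi n) = (\prod_(i < n) pi i)%N.
Proof.
elim: n => [|n IH] /=; first by rewrite big_ord0.
by rewrite size_allpairs IH size_iota big_ord_recr.
Qed.

Lemma Papprox_le1 pi eta j alpha n : Rle (Papprox pi eta j alpha n) R1.
Proof.
rewrite /Papprox -size_prefixes.
set c := count _ _; set N := size _.
have hc : (c <= N)%N by apply: count_size.
case: N hc => [|N] hc.
  move: hc; rewrite leqn0 => /eqP ->; rewrite /Rdiv /= Rmult_0_l; exact: Rle_0_1.
have hN : Rlt 0 (INR N.+1) by apply: lt_0_INR; apply/ltP.
apply: (Rmult_le_reg_r (INR N.+1)) => //.
rewrite /Rdiv Rmult_assoc Rinv_l; last by apply: Rgt_not_eq.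
rewrite Rmult_1_r Rmult_1_l; apply: le_INR; exact/leP.
Qed.

Lemma Pset_bound pi eta j alpha : bound (Pset pi eta j alpha).
Proof. by exists R1 => r [n ->]; apply: Papprox_le1. Qed.

Lemma Pset_inhab pi eta j alpha : exists r, Pset pi eta j alpha r.
Proof. by exists (Papprox pi eta j alpha 0); exists 0. Qed.

(* P_j({alpha}) = \bar nu({ y : sum_{k<j} gamma(S^k y) = alpha }) : the event is,
   up to a null set, the increasing union over n of the level-n cylinders above,
   so its measure is the supremum of their measures. *)
Definition Pj (pi : nat -> nat) (eta : nat -> nat -> nat) (j : nat) (alpha : int) : R :=
  proj1_sig (completeness _ (Pset_bound pi eta j alpha) (Pset_inhab pi eta j alpha)).

Definition Sset (pi : nat -> nat) (eta : nat -> nat -> nat) (m : nat) : seq nat :=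
  [seq eta m i | i <- iota 0 (pi m).-1] ++
  [seq eta m (pi m).-1 + eta m.+1 i | i <- iota 0 (pi m.+1).-1].

(* Main.v *)
Require Import Defs.
From Stdlib Require Import Reals Classical.
From mathcomp Require Import all_boot all_algebra.
From mathcomp Require Import zify.

Lemma nat_cong (d a b : nat) :
  (Posz a - Posz b)%R \in dvdz (Posz d) -> a = b %[mod d].
Proof. by rewrite -eqz_mod_dvd !modz_nat => /eqP []. Qed.

Lemma int_cong (d a b : nat) :
  a = b %[mod d] -> (Posz a - Posz b)%R \in dvdz (Posz d).
Proof. by move=> H; rewrite -eqz_mod_dvd !modz_nat H. Qed.

Lemma congD d a1 b1 a2 b2 : a1 = b1 %[mod d] -> a2 = b2 %[mod d] ->
  a1 + a2 = b1 + b2 %[mod d].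
Proof. by move=> H1 H2; rewrite -modnDm H1 H2 modnDm. Qed.

Section Main.
Variables (pi : nat -> nat) (eta : nat -> nat -> nat) (d : nat).
Hypothesis Hpi : forall m, (2 <= pi m)%N.
Hypothesis HE : forall m a b, a \in Sset pi eta m -> b \in Sset pi eta m ->
          (Posz a - Posz b)%R \in dvdz (Posz d).

Lemma first_in m i : i < (pi m).-1 -> eta m i \in Sset pi eta m.
Proof. by move=> hi; rewrite mem_cat; apply/orP; left; apply: map_f; rewrite mem_iota. Qed.

Lemma second_in m : eta m (pi m).-1 + eta m.+1 0 \in Sset pi eta m.
Proof.
rewrite mem_cat; apply/orP; right; apply: map_f; rewrite mem_iota.
have := Hpi m.+1; lia.
Qed.

Lemma c_first m i : i < (pi m).-1 -> eta m i = eta m 0 %[mod d].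
Proof.
move=> hi; apply: nat_cong; apply: HE; first exact: first_in.
apply: first_in; have := Hpi m; lia.
Qed.

Lemma c_second m : eta m (pi m).-1 + eta m.+1 0 = eta m 0 %[mod d].
Proof.
apply: nat_cong; apply: HE; first exact: second_in.
apply: first_in; have := Hpi m; lia.
Qed.

Lemma c_chain t : \sum_(m < t) eta m (pi m).-1 + eta t 0 = eta 0 0 %[mod d].
Proof.
elim: t => [|t IH]; first by rewrite big_ord0.
rewrite big_ord_recr /= -addnA.
rewrite -IH; apply: congD => //; exact: c_second.
Qed.

Lemma odo_inv y : (forall m, y m < pi m) -> forall m, odo pi y m < pi m.
Proof.
move=> Hy m; rewrite /odo; case: ifP => _; last exact: Hy.
have := Hy m; have := Hpi m; case: eqP => /=; lia.
Qed.

Lemma iter_inv k y : (forall m, y m < pi m) -> forall m, odo_iter pi k y m < pi m.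
Proof.
rewrite /odo_iter; elim: k => [|k IH] Hy //=; exact/odo_inv/IH.
Qed.

Lemma gamma_c n y : (forall m, y m < pi m) ->
  has (fun t => y t < (pi t).-1) (iota 0 n) ->
  gamma_upto pi eta n y = eta 0 0 %[mod d].
Proof.
move=> Hy Hh; rewrite /gamma_upto.
set t := tpos pi n y.
have ht : t < n by move: Hh; rewrite has_find size_iota.
have Hbef : forall m, m < t -> y m = (pi m).-1.
  move=> m hm; have := before_find 0 hm; rewrite nth_iota; last lia.
  rewrite add0n => /negbT; rewrite -leqNgt => h; have := Hy m; lia.
have Ht : y t < (pi t).-1 by have := nth_find 0 Hh; rewrite nth_iota.
rewrite big_ord_recr /= -(c_chain t); apply: congD; last exact: c_first.
by rewrite (eq_bigr (fun m : 'I_t => eta m (pi m).-1)) // => i _; rewrite Hbef.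
Qed.

Lemma psum_c j n y : (forall m, y m < pi m) -> determined pi j n y ->
  Psum pi eta j n y = j * eta 0 0 %[mod d].
Proof.
move=> Hy /allP Hd; rewrite /Psum.
elim: j Hd => [|j IH] Hd; first by rewrite big_ord0.
rewrite big_ord_recr /= mulSnr; apply: congD.
  by apply: IH => k hk; apply: Hd; move: hk; rewrite !mem_iota; lia.
apply: gamma_c; first exact: iter_inv.
by apply: Hd; rewrite mem_iota; lia.
Qed.

Lemma prefixes_spec {n p} : p \in prefixes pi n ->
  size p = n /\ forall i, i < n -> nth 0 p i < pi i.
Proof.
elim: n p => [|n IH] p /=; first by rewrite inE => /eqP ->.
case/allpairsP => [[q x] [/= hq hx ->]].
have [hs hi] := IH q hq; rewrite mem_iota in hx.
split; first by rewrite size_rcons hs.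
move=> i hin; rewrite nth_rcons hs; case: (ltnP i n) => h1; first exact: hi.
case: eqP => h2; first by subst; lia.
have := Hpi i; lia.
Qed.

Lemma pos_good j alpha : Rlt 0 (Pj pi eta j alpha) ->
  exists n p, p \in prefixes pi n /\ good pi eta j alpha n p.
Proof.
rewrite /Pj; case: completeness => l [Hub Hl] /= hl.
have [n hn] : exists n, Rlt 0 (Papprox pi eta j alpha n).
  apply: NNPP => hne.
  have : Rle l 0.
    apply: Hl => r [n ->]; apply: Rnot_lt_le => h; apply: hne; by exists n.
  move=> h; exact: (Rlt_not_le _ _ hl h).
have : 0 < count (good pi eta j alpha n) (prefixes pi n).
  move: hn; rewrite /Papprox; case: (count _ _) => [|c] //.
  rewrite /Rdiv /= Rmult_0_l => /Rlt_irrefl [].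
rewrite -has_count => /hasP [p hp hg]; by exists n, p.
Qed.

Lemma good_c j alpha : Rlt 0 (Pj pi eta j alpha) ->
  exists a, alpha = Posz a /\ a = j * eta 0 0 %[mod d].
Proof.
move=> /pos_good [n [p [hp /andP [hdet /eqP <-]]]].
exists (Psum pi eta j n (ext p)); split => //.
apply: psum_c => //.
have [hs hi] := prefixes_spec hp.
move=> m; rewrite /ext; case: (ltnP m n) => h; first exact: hi.
by rewrite nth_default ?hs //; have := Hpi m; lia.
Qed.

End Main.

Theorem mainTheorem17 (pi : nat -> nat) (eta : nat -> nat -> nat)
  (Hpi : forall m, (2 <= pi m)%N) (d : nat) (Hd : (1 <= d)%N)
  (HE : forall m a b, a \in Sset pi eta m -> b \in Sset pi eta m ->
          (Posz a - Posz b)%R \in dvdz (Posz d))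
  (j : nat) (Hj : (1 <= j)%N) (alpha beta : int)
  (Ha : Rlt 0 (Pj pi eta j alpha)) (Hb : Rlt 0 (Pj pi eta j beta)) :
  (alpha - beta)%R \in dvdz (Posz d).
Proof.
have [a [-> ha]] := @good_c _ _ _ Hpi HE _ _ Ha.
have [b [-> hb]] := @good_c _ _ _ Hpi HE _ _ Hb.
by apply: int_cong; rewrite ha hb.
Qed.
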